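(* Let $P$ be a finite poset and $R$ a commutative unital ring. If $D$ is a derivation of $I^3(P,R)$, then $D=0$.
   Context: For a finite poset $P$, let $P^3_\le=\{(x,y,z)\in P^3: x\le y\le z\}$. The third partial flag incidence algebra $I^3(P,R)$ is the $R$-module of all functions $f:P^3_\le\to R$ (pointwise operations) with the (non-associative) multiplication $(fg)(x_1,x_2,x_3)=\sum f(x_1,y_1,y_2)\,g(y_1,y_2,x_3)$, the sum over all $y_1,y_2$ with $x_1\le y_1\le x_2\le y_2\le x_3$. A derivation of $I^3(P,R)$ is an $R$-linear map $D:I^3(P,R)\to I^3(P,R)$ such that $D(fg)=D(f)g+fD(g)$ for all $f,g$. *)

(* Defs.v *)
From HB Require Import structures.
From mathcomp Require Import all_boot all_order all_algebra.
Set Implicit Arguments. Unset Strict Implicit. Unset Printing Implicit Defensive.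
Import Order.TTheory GRing.Theory.
Local Open Scope order_scope.

Definition chain3 {d : Order.disp_t} (P : finPOrderType d) (t : P * P * P) : bool :=
  (t.1.1 <= t.1.2) && (t.1.2 <= t.2).

Definition P3 {d : Order.disp_t} (P : finPOrderType d) :=
  {t : P * P * P | chain3 t}.

Definition I3 {d : Order.disp_t} (P : finPOrderType d) (R : comPzRingType) :=
  {ffun P3 P -> R}.

Local Open Scope ring_scope.

(* the value of f at (x,y,z), with 0 off P^3_<= (only used inside the product,
   where the summation condition guarantees (x,y,z) in P^3_<=) *)
Definition I3at {d : Order.disp_t} {P : finPOrderType d} {R : comPzRingType}
  (f : I3 P R) (x y z : P) : R :=
  match boolP (chain3 (x, y, z)) with
  | AltTrue h => f (exist _ (x, y, z) h)
  | AltFalse _ => 0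
  end.

Definition I3mul {d : Order.disp_t} {P : finPOrderType d} {R : comPzRingType}
  (f g : I3 P R) : I3 P R :=
  [ffun t : P3 P =>
     let: (x1, x2, x3) := sval t in
     \sum_(y1 : P | (x1 <= y1)%O && (y1 <= x2)%O)
       \sum_(y2 : P | (x2 <= y2)%O && (y2 <= x3)%O)
         I3at f x1 y1 y2 * I3at g y1 y2 x3].

Definition is_derivation {d : Order.disp_t} {P : finPOrderType d} {R : comPzRingType}
  (D : I3 P R -> I3 P R) : Prop :=
  [/\ (forall f g : I3 P R, D [ffun t : P3 P => f t + g t] = [ffun t : P3 P => D f t + D g t]),
      (forall (r : R) (f : I3 P R), D [ffun t : P3 P => r * f t] = [ffun t : P3 P => r * D f t])
    & (forall f g : I3 P R, D (I3mul f g) = I3mul (D f) g + I3mul f (D g))].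

(* Main.v *)
Require Import Defs.
From HB Require Import structures.
From mathcomp Require Import all_boot all_order all_algebra ring.
Set Implicit Arguments. Unset Strict Implicit. Unset Printing Implicit Defensive.
Import Order.TTheory GRing.Theory.
Local Open Scope ring_scope.

Section S.
Variables (d : Order.disp_t) (P : finPOrderType d) (R : comPzRingType).
Implicit Types f g : I3 P R.

Lemma I3at_chain f x y z (h : chain3 (x,y,z)) : I3at f x y z = f (exist _ (x,y,z) h).
Proof.
rewrite /I3at; case: {-}_ / boolP => h' /=; last by rewrite h in h'.
by congr (f _); apply: val_inj.
Qed.

Lemma I3at_nchain f x y z : ~~ chain3 (x,y,z) -> I3at f x y z = 0.
Proof. by move=> h; rewrite /I3at; case: {-}_ / boolP => h' //; rewrite h' in h. Qed.

Lemma I3atE f (s : P3 P) : I3at f (sval s).1.1 (sval s).1.2 (sval s).2 = f s.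
Proof. by case: s => [[[x y] z] h]; rewrite /= I3at_chain; congr (f _); apply: val_inj. Qed.

Lemma I3mulE f g (s : P3 P) : I3mul f g s =
  \sum_(y1 : P | ((sval s).1.1 <= y1)%O && (y1 <= (sval s).1.2)%O)
       \sum_(y2 : P | ((sval s).1.2 <= y2)%O && (y2 <= (sval s).2)%O)
         I3at f (sval s).1.1 y1 y2 * I3at g y1 y2 (sval s).2.
Proof. by case: s => [[[x y] z] h]; rewrite ffunE. Qed.

Definition E (p q r : P) : I3 P R := [ffun s : P3 P => (sval s == (p,q,r))%:R].

Lemma I3at_E p q r x y z : chain3 (x,y,z) -> I3at (E p q r) x y z = ((x,y,z) == (p,q,r))%:R.
Proof. by move=> h; rewrite I3at_chain ffunE. Qed.

Lemma eq3 (x y z p q r : P) : ((x,y,z) == (p,q,r))%:R = (x==p)%:R * (y==q)%:R * (z==r)%:R :> R.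
Proof. by rewrite !xpair_eqE; case: (x==p); case: (y==q); case: (z==r); rewrite ?mul1r ?mul0r. Qed.

Lemma sum_delta (C : pred P) (q : P) (F : P -> R) :
  \sum_(y | C y) ((y == q)%:R * F y) = (C q)%:R * F q.
Proof.
rewrite big_mkcond (bigD1 q) //= eqxx mul1r big1 ?addr0 => [|y /negbTE ->].
  by case: (C q); rewrite ?mul1r ?mul0r.
by rewrite mul0r; case: (C y).
Qed.

Lemma chain_of (x y z : P) : (x <= y)%O -> (y <= z)%O -> chain3 (x,y,z).
Proof. by move=> h1 h2; rewrite /chain3 /= h1 h2. Qed.

Lemma mulEl p q r g (s : P3 P) : I3mul (E p q r) g s =
  ((sval s).1.1 == p)%:R * ((((sval s).1.1 <= q)%O && (q <= (sval s).1.2)%O)%:R *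
  ((((sval s).1.2 <= r)%O && (r <= (sval s).2)%O)%:R * I3at g q r (sval s).2)).
Proof.
rewrite I3mulE.
transitivity (\sum_(y1 | ((sval s).1.1 <= y1)%O && (y1 <= (sval s).1.2)%O)
  ((y1 == q)%:R * (((sval s).1.1 == p)%:R *
   \sum_(y2 | ((sval s).1.2 <= y2)%O && (y2 <= (sval s).2)%O)
      ((y2 == r)%:R * I3at g y1 y2 (sval s).2)))).
  apply: eq_bigr => y1 /andP[h1 h2]; rewrite !mulr_sumr; apply: eq_bigr => y2 /andP[h3 h4].
  rewrite I3at_E ?(chain_of h1 (le_trans h2 h3)) // eq3; ring.
rewrite sum_delta sum_delta; ring.
Qed.

Lemma mulEr p q r g (s : P3 P) : I3mul g (E p q r) s =
  ((sval s).2 == r)%:R * ((((sval s).1.1 <= p)%O && (p <= (sval s).1.2)%O)%:R *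
  ((((sval s).1.2 <= q)%O && (q <= (sval s).2)%O)%:R * I3at g (sval s).1.1 p q)).
Proof.
rewrite I3mulE.
transitivity (\sum_(y1 | ((sval s).1.1 <= y1)%O && (y1 <= (sval s).1.2)%O)
  ((y1 == p)%:R * (((sval s).2 == r)%:R *
   \sum_(y2 | ((sval s).1.2 <= y2)%O && (y2 <= (sval s).2)%O)
      ((y2 == q)%:R * I3at g (sval s).1.1 y1 y2)))).
  apply: eq_bigr => y1 /andP[h1 h2]; rewrite !mulr_sumr; apply: eq_bigr => y2 /andP[h3 h4].
  rewrite I3at_E ?(chain_of (le_trans h2 h3) h4) // eq3; ring.
rewrite sum_delta sum_delta; ring.
Qed.


Lemma sum_deltaT (T : finType) (q : T) (F : T -> R) :
  \sum_(y : T) (F y * (q == y)%:R) = F q.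
Proof.
rewrite (bigD1 q) //= eqxx mulr1 big1 ?addr0 // => y /negbTE.
by rewrite eq_sym => ->; rewrite mulr0.
Qed.

Lemma mid0 (x y w q : P) (z : R) : y != q ->
  (((x <= q)%O && (q <= y)%O)%:R * ((((y <= q)%O && (q <= w)%O)%:R * z)) = 0 :> R).
Proof.
move=> hy; case: (boolP (q <= y)%O) => h1; case: (boolP (y <= q)%O) => h2;
  rewrite ?andbF ?andFb ?mul0r ?mulr0 //.
by move: hy; rewrite eq_le h1 h2.
Qed.

Lemma factorE p q r : chain3 (p,q,r) -> E p q r = I3mul (E p q q) (E q q r).
Proof.
move=> /andP[/= hpq hqr]; apply/ffunP => s; rewrite mulEl ffunE.
case: s => [[[x y] z] hs] /=.
case: (boolP (chain3 (q,q,z))) => hc; last first.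
  rewrite I3at_nchain // !mulr0.
  case: eqP => // e; move: hc; case: e => _ _ ->; by rewrite /chain3 /= lexx hqr.
rewrite I3at_E // !eq3.
case: (eqVneq x p) => [->|]; last by rewrite !mul0r.
case: (eqVneq y q) => [->|hy]; last by rewrite mid0 // mulr0 mul0r.
case: (eqVneq z r) => [->|]; last by rewrite !mulr0.
by rewrite !eqxx hpq hqr ?lexx ?mul1r.
Qed.

Variable D : I3 P R -> I3 P R.
Hypothesis HD : is_derivation D.

Lemma Dadd f g : D (f + g) = D f + D g.
Proof.
case: HD => H1 _ _.
have -> : f + g = [ffun t => f t + g t] by apply/ffunP => t; rewrite !ffunE.
by rewrite H1; apply/ffunP => t; rewrite !ffunE.
Qed.

Lemma D0 : D 0 = 0.
Proof.
have := Dadd 0 0; rewrite addr0 => /(congr1 (fun x => x - D 0)).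
by rewrite addrK subrr => <-.
Qed.

Lemma Dmul f g : D (I3mul f g) = I3mul (D f) g + I3mul f (D g).
Proof. by case: HD. Qed.

Lemma Dscal (c : R) f : D [ffun t => c * f t] = [ffun t => c * D f t].
Proof. by case: HD. Qed.

Lemma Dmid p q r (s : P3 P) : chain3 (p,q,r) -> (sval s).1.2 != q -> D (E p q r) s = 0.
Proof.
move=> h hs; rewrite (factorE h) Dmul ffunE mulEr mulEl.
by rewrite !mid0 // !mulr0 addr0.
Qed.

Lemma Dsum (I : Type) (r : seq I) (Pr : pred I) (F : I -> I3 P R) :
  D (\sum_(i <- r | Pr i) F i) = \sum_(i <- r | Pr i) D (F i).
Proof. exact: (big_morph D Dadd D0). Qed.

Lemma I3at_D0 p q r x y z : chain3 (p,q,r) -> y != q -> I3at (D (E p q r)) x y z = 0.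
Proof.
move=> h hy; case: (boolP (chain3 (x,y,z))) => hc; last exact: I3at_nchain.
by rewrite I3at_chain; apply: Dmid.
Qed.

Lemma diag a b : (a <= b)%O ->
  I3at (D (E a b b)) a b b = 0 /\ I3at (D (E a a b)) a a b = 0.
Proof.
move=> hab.
have c1 : chain3 (a,a,b) by rewrite /chain3 /= lexx hab.
have c2 : chain3 (a,b,b) by rewrite /chain3 /= lexx hab.
set S := \sum_(y | (a <= y)%O && (y <= b)%O) E a y b.
have HS : I3mul (E a a b) (E a b b) = S.
  apply/ffunP => s; rewrite mulEl sum_ffunE.
  case: s => [[[x y] z] hs] /=.
  transitivity (\sum_(i | (a <= i)%O && (i <= b)%O) ((i == y)%:R * ((x == a)%:R * (z == b)%:R) : R));
    last first.
    by apply: eq_bigr => i _; rewrite ffunE /= eq3 (eq_sym y); ring.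
  rewrite sum_delta.
  case: (eqVneq x a) => [->|]; last by rewrite !mul0r mulr0.
  case: (eqVneq z b) => [->|hz].
    rewrite I3at_E // eq3 !eqxx !lexx /= andbT.
    by case: (a <= y)%O; case: (y <= b)%O; rewrite ?mul1r ?mul0r ?mulr0.
  have -> : I3at (E a b b) a b z = 0.
    case: (boolP (chain3 (a,b,z))) => hc; last exact: I3at_nchain.
    by rewrite I3at_E // eq3 (negbTE hz) mulr0.
  by rewrite !mulr0.
have HD1 := congr1 D HS; rewrite Dmul Dsum in HD1.
suff [h1 h2] : I3at (D (E a a b)) a a b = 0 /\ I3at (D (E a b b)) a b b = 0 by [].
split.
- have := congr1 (fun F : I3 P R => F (exist _ (a,b,b) c2)) HD1.
  rewrite /= ffunE mulEr mulEl sum_ffunE (bigD1 b) ?lexx ?hab //= big1 => [|y /andP[/andP[ay yb'] ne]];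
    last by apply: Dmid; [rewrite /chain3 /= ay yb' | rewrite /= eq_sym].
  rewrite -(I3at_chain (D (E a b b)) c2) !eqxx /= !mul1r addr0.
  by move/(congr1 (fun t => t - I3at (D (E a b b)) a b b)); rewrite addrK subrr => <-.
- have := congr1 (fun F : I3 P R => F (exist _ (a,a,b) c1)) HD1.
  rewrite /= ffunE mulEr mulEl sum_ffunE (bigD1 a) ?lexx ?hab //= big1 => [|y /andP[/andP[ay yb'] ne]];
    last by apply: Dmid; [rewrite /chain3 /= ay yb' | rewrite /= eq_sym].
  rewrite -(I3at_chain (D (E a a b)) c1) !eqxx /= !mul1r addr0.
  by rewrite -[X in _ = X]addr0 => /addrI.
Qed.

Lemma Kall a b x : (a <= b)%O -> I3at (D (E a b b)) x b b = 0.
Proof.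
move=> hab; case: (eqVneq x a) => [->|hx]; first by case: (diag hab).
case: (boolP (chain3 (x,b,b))) => hc; last exact: I3at_nchain.
have hxb : (x <= b)%O by case/andP: hc.
have cxb : chain3 (x,x,b) by rewrite /chain3 /= lexx hxb.
have Z : I3mul (E x x b) (E a b b) = 0.
  apply/ffunP => s; rewrite mulEl !ffunE.
  case: (boolP (chain3 (x,b,(sval s).2))) => hc'; last by rewrite I3at_nchain // !mulr0.
  by rewrite I3at_E // eq3 (negbTE hx) !mul0r !mulr0.
have := congr1 D Z; rewrite Dmul D0 => /(congr1 (fun F : I3 P R => F (exist _ (x,b,b) hc))).
rewrite ffunE mulEr mulEl [X in _ = X]ffunE /= I3at_D0 // ?(eq_sym a) // !mulr0 add0r.
by rewrite !eqxx !lexx hxb !mul1r.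
Qed.

Lemma Mall b c x : (b <= c)%O -> I3at (D (E b b c)) b b x = 0.
Proof.
move=> hbc; case: (eqVneq x c) => [->|hx]; first by case: (diag hbc).
case: (boolP (chain3 (b,b,x))) => hc; last exact: I3at_nchain.
have hbx : (b <= x)%O by case/andP: hc.
have cbx : chain3 (b,x,x) by rewrite /chain3 /= lexx hbx.
have Z : I3mul (E b b c) (E b x x) = 0.
  apply/ffunP => s; rewrite mulEl !ffunE.
  case: (boolP (chain3 (b,c,(sval s).2))) => hc'; last by rewrite I3at_nchain // !mulr0.
  by rewrite I3at_E // eq3 (eq_sym c) (negbTE hx) !mulr0 !mul0r !mulr0.
have := congr1 D Z; rewrite Dmul D0 => /(congr1 (fun F : I3 P R => F (exist _ (b,b,x) hc))).
rewrite ffunE mulEr mulEl [X in _ = X]ffunE /= (@I3at_D0 b x x) ?(eq_sym c) // !mulr0 addr0.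
by rewrite !eqxx !lexx hbx !mul1r.
Qed.

Lemma DE0 a b c : chain3 (a,b,c) -> D (E a b c) = 0.
Proof.
move=> h; have /andP[/= hab hbc] := h.
rewrite factorE // Dmul; apply/ffunP => s.
by rewrite ffunE mulEr mulEl [X in _ = X]ffunE Kall ?Mall // !mulr0 addr0.
Qed.

Lemma Dzero f : D f = 0.
Proof.
have Hf : f = \sum_(t : P3 P) [ffun s => f t * E (sval t).1.1 (sval t).1.2 (sval t).2 s].
  apply/ffunP => s; rewrite sum_ffunE.
  under eq_bigr => t _ do rewrite !ffunE -!surjective_pairing val_eqE.
  by rewrite sum_deltaT.
rewrite Hf Dsum big1 // => t _.
rewrite Dscal DE0; last by case: t => [[[x y] z] h].
by apply/ffunP => s; rewrite !ffunE mulr0.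
Qed.
End S.

Theorem theorem4p7 (d : Order.disp_t) (P : finPOrderType d) (R : comPzRingType)
  (D : I3 P R -> I3 P R) :
  is_derivation D -> forall f : I3 P R, D f = [ffun => 0%R] :> I3 P R.
Proof.
move=> HD f; rewrite (Dzero HD f); by apply/ffunP => s; rewrite !ffunE.
Qed.
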